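(* Let $\Sigma=\{a\}$, $k=4$, and $\alpha=\big((_1\,\backslash4\,a)_1\,(_2\,\backslash3)_2\,(_3\,\backslash2\,a)_3\,(_4\,\backslash1\,\backslash3)_4\big)^\ast$. Then $L(\alpha)=\{a^{n(n+7)(2n+1)/6} : n\in\mathbb{N}\}$.
   Context: For $k\ge1$, $[k]=\{1,\dots,k\}$, $B_k=\{[_i,\,]_i:i\in[k]\}$ fresh brackets; $g$ fixes letters of $\Sigma$ and erases brackets. $\mathcal{R}_k(\alpha)$: the regular language over $\Sigma\uplus B_k\uplus[k]$ obtained by reading the rewb $\alpha$ as a regular expression with $\backslash i$ as the letter $i$ and $(_i\alpha_0)_i$ as $[_i\mathcal{R}_k(\alpha_0)]_i$. Dereferencing $\mathcal{D}_k$: repeatedly take the leftmost number $i\in[k]$ in the current string; if no $[_i$ lies to its left delete it (unbound references denote $\varepsilon$); else take the nearest $[_i$ to its left; if no $]_i$ lies between them the result is undefined; else replace this $i$ by $g(u)$, $u$ the string strictly between that $[_i$ and the first subsequent $]_i$; when no numbers remain delete all brackets. $L(\alpha)=\{\mathcal{D}_k(v):v\in\mathcal{R}_k(\alpha)\}$. *)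

(* Defs.v *)
From Stdlib Require Import List Arith.
Import ListNotations.

Set Implicit Arguments.

(* Symbols over Sigma ⊎ B_k ⊎ [k]: letters, open brackets [_i,
   close brackets ]_i, and numbers (references) i. *)
Inductive sym (S : Type) : Type :=
| Let (x : S)
| Open (i : nat)
| Close (i : nat)
| Ref (i : nat).
Arguments Open {S} i.
Arguments Close {S} i.
Arguments Ref {S} i.

Inductive rewb (S : Type) : Type :=
| REmpty
| REps
| RChr (x : S)
| RCat (r1 r2 : rewb S)
| RAlt (r1 r2 : rewb S)
| RStar (r : rewb S)
| RGrp (i : nat) (r : rewb S)
| RBref (i : nat).
Arguments REmpty {S}.
Arguments REps {S}.
Arguments RBref {S} i.

Inductive inR (S : Type) : rewb S -> list (sym S) -> Prop :=
| inR_eps : inR REps []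
| inR_chr x : inR (RChr x) [Let x]
| inR_cat r1 r2 w1 w2 : inR r1 w1 -> inR r2 w2 -> inR (RCat r1 r2) (w1 ++ w2)
| inR_altl r1 r2 w : inR r1 w -> inR (RAlt r1 r2) w
| inR_altr r1 r2 w : inR r2 w -> inR (RAlt r1 r2) w
| inR_star0 r : inR (RStar r) []
| inR_starS r w1 w2 : inR r w1 -> inR (RStar r) w2 -> inR (RStar r) (w1 ++ w2)
| inR_grp i r w : inR r w -> inR (RGrp i r) (Open i :: w ++ [Close i])
| inR_bref i : inR (RBref i) [Ref i].

(* g: fixes letters, erases brackets (and numbers; only applied to
   number-free strings). *)
Fixpoint g (S : Type) (w : list (sym S)) : list S :=
  match w with
  | [] => []
  | Let x :: w' => x :: g w'
  | _ :: w' => g w'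
  end.

(* Given the already-processed prefix in REVERSED order [acc], find the
   nearest [_i (to the left of the current position) and return the
   (forward) string lying strictly between it and the current position. *)
Fixpoint find_open (S : Type) (i : nat) (acc after : list (sym S))
  : option (list (sym S)) :=
  match acc with
  | [] => None
  | Open j :: acc' =>
      if Nat.eqb j i then Some after else find_open i acc' (Open j :: after)
  | c :: acc' => find_open i acc' (c :: after)
  end.

Fixpoint take_until_close (S : Type) (i : nat) (seg : list (sym S))
  : option (list (sym S)) :=
  match seg with
  | [] => None
  | Close j :: seg' =>
      if Nat.eqb j i then Some []
      else option_map (cons (Close j)) (take_until_close i seg')
  | c :: seg' => option_map (cons c) (take_until_close i seg')
  end.

(* Dereferencing, processing numbers from left to right (i.e. always the
   leftmost remaining number).  [acc] is the processed prefix reversed;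
   it never contains numbers.  None = undefined. *)
Fixpoint deref_aux (S : Type) (acc w : list (sym S)) : option (list S) :=
  match w with
  | [] => Some (g (rev acc))
  | Ref i :: w' =>
      match find_open i acc [] with
      | None => deref_aux acc w'      (* unbound reference: delete it *)
      | Some seg =>
          match take_until_close i seg with
          | None => None
          | Some u => deref_aux (rev (map (@Let S) (g u)) ++ acc) w'
          end
      end
  | c :: w' => deref_aux (c :: acc) w'
  end.

Definition deref (S : Type) (w : list (sym S)) : option (list S) :=
  deref_aux [] w.

Definition lang (S : Type) (alpha : rewb S) (w : list S) : Prop :=
  exists v, inR alpha v /\ deref v = Some w.

Definition a : unit := tt.

Definition alpha11 : rewb unit :=
  RStar (RCat (RGrp 1 (RCat (RBref 4) (RChr a)))
        (RCat (RGrp 2 (RBref 3))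
        (RCat (RGrp 3 (RCat (RBref 2) (RChr a)))
              (RGrp 4 (RCat (RBref 1) (RBref 3)))))).

(* Main.v *)
Require Import Defs.
From Stdlib Require Import List Arith Lia.
Import ListNotations.

Definition L n : list (sym unit) := repeat (Let tt) n.

Lemma rep_swap (A : Type) (x : A) n l : repeat x n ++ x :: l = x :: repeat x n ++ l.
Proof. induction n; simpl; congruence. Qed.

Lemma fo_L i n acc after : find_open i (L n ++ acc) after = find_open i acc (L n ++ after).
Proof. unfold L; revert after; induction n; intros; simpl; auto.
  rewrite IHn. now rewrite rep_swap. Qed.

Lemma tuc_L i n rest : take_until_close i (L n ++ Close i :: rest) = Some (L n).
Proof. unfold L; induction n; simpl. now rewrite Nat.eqb_refl. now rewrite IHn. Qed.

Lemma da_L n acc w : deref_aux acc (L n ++ w) = deref_aux (L n ++ acc) w.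
Proof. unfold L; revert acc; induction n; intros; simpl; auto.
  rewrite IHn. now rewrite rep_swap. Qed.

Lemma gL n : rev (map (@Let unit) (g (L n))) = L n.
Proof. unfold L. assert (g (repeat (Let tt) n) = repeat tt n) as ->.
  { induction n; simpl; congruence. }
  rewrite map_repeat. induction n; simpl; auto. rewrite IHn. unfold L.
  change [Let tt] with (repeat (Let tt) 1). rewrite <- repeat_app.
  now rewrite Nat.add_comm. Qed.

Lemma swapL n l : L n ++ Let tt :: l = Let tt :: L n ++ l.
Proof. apply rep_swap. Qed.
Arguments L : simpl never.

Definition P : list (sym unit) := [Open 1; Ref 4; Let tt; Close 1; Open 2; Ref 3; Close 2; Open 3; Ref 2; Let tt; Close 3; Open 4; Ref 1; Ref 3; Close 4].

Definition RB x y z w : list (sym unit) :=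
  [Close 4] ++ L w ++ [Open 4; Close 3] ++ L z ++ [Open 3; Close 2] ++ L y ++ [Open 2; Close 1] ++ L x ++ [Open 1].

Lemma step x y z w acc' rest :
  deref_aux (RB x y z w ++ acc') (P ++ rest) =
  deref_aux (RB (S w) z (S z) (S z + S w) ++ RB x y z w ++ acc') rest.
Proof.
  unfold RB, P. simpl.
  repeat (progress (simpl; repeat rewrite ?fo_L, ?tuc_L, ?gL, ?swapL, <- ?app_assoc)).
  unfold L; rewrite repeat_app; simpl; rewrite <- !app_assoc; simpl; rewrite rep_swap; reflexivity.
Qed.

Lemma g_app (l1 l2 : list (sym unit)) : g (l1 ++ l2) = g l1 ++ g l2.
Proof. induction l1 as [|c l1 IH]; simpl; auto. destruct c; simpl; rewrite ?IH; auto. Qed.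

Lemma g_rev (l : list (sym unit)) : g (rev l) = rev (g l).
Proof. induction l as [|c l IH]; simpl; auto. rewrite g_app, IH. destruct c; simpl; auto using app_nil_r. Qed.

Lemma unit_rep (l : list unit) : l = repeat tt (length l).
Proof. induction l as [|[] l IH]; simpl; congruence. Qed.

Lemma len_gL n : length (g (L n)) = n.
Proof. unfold L; induction n; simpl; auto. Qed.

Lemma len_RB x y z w : length (g (RB x y z w)) = x + y + z + w.
Proof. unfold RB. rewrite !g_app, !length_app, !len_gL. simpl. lia. Qed.

Fixpoint F n w z := match n with 0 => 0 | S n => 2*w+3*z+4 + F n (S z + S w) (S z) end.

Fixpoint Pn n := match n with 0 => [] | S m => P ++ Pn m end.

Lemma Pn_0 : Pn 0 = []. Proof. reflexivity. Qed.
Lemma Pn_S n : Pn (S n) = P ++ Pn n. Proof. reflexivity. Qed.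
Lemma deref_nil (acc : list (sym unit)) : deref_aux acc [] = Some (g (rev acc)). Proof. reflexivity. Qed.

Lemma iter n : forall x y z w acc', deref_aux (RB x y z w ++ acc') (Pn n) =
  Some (repeat tt (length (g (RB x y z w ++ acc')) + F n w z)).
Proof.
  induction n; intros.
  - rewrite Pn_0, deref_nil.
    rewrite Nat.add_0_r, g_rev, <- length_rev. apply f_equal, unit_rep.
  - rewrite Pn_S, step, IHn. f_equal. f_equal. rewrite !g_app, !length_app, !len_RB. simpl F. lia.
Qed.

Lemma F_S n w z : F (S n) w z = 2*w+3*z+4 + F n (S z + S w) (S z). Proof. reflexivity. Qed.

Lemma F_closed n : forall w z, 6*F n w z + 3*(2*z+7)*n + 6*n*n = 6*n*(2*w+3*z+4) + 3*(2*z+7)*n*n + 2*n*n*n + 4*n.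
Proof. induction n; intros. simpl; lia. rewrite F_S. specialize (IHn (S z + S w) (S z)).
  generalize dependent (F n (S z + S w) (S z)). intros f IHn. ring_simplify in IHn. ring_simplify. lia. Qed.

Lemma first rest : deref_aux [] (P ++ rest) = deref_aux (RB 1 0 1 2 ++ []) rest.
Proof. unfold P, RB, L. simpl. reflexivity. Qed.

Lemma deref_Pn n : deref (Pn n) = Some (repeat tt (n * (n + 7) * (2 * n + 1) / 6)).
Proof.
  destruct n as [|m]. reflexivity.
  unfold deref. rewrite Pn_S. rewrite first, iter. rewrite app_nil_r, len_RB.
  do 2 f_equal. pose proof (F_closed m 2 1).
  replace (S m * (S m + 7) * (2 * S m + 1)) with ((1+0+1+2 + F m 2 1) * 6) by nia.
  now rewrite Nat.div_mul.
Qed.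

Definition body : rewb unit := RCat (RGrp 1 (RCat (RBref 4) (RChr a)))
        (RCat (RGrp 2 (RBref 3))
        (RCat (RGrp 3 (RCat (RBref 2) (RChr a)))
              (RGrp 4 (RCat (RBref 1) (RBref 3))))).

Lemma body_inv w : inR body w -> w = P.
Proof.
  unfold body; intro H.
  repeat match goal with
  | H : inR _ _ |- _ => inversion H; subst; clear H
  end. reflexivity.
Qed.

Lemma body_P : inR body P.
Proof. assert (exists w, inR body w /\ w = P) as [w [H E]].
  { eexists; split; [ repeat econstructor | reflexivity ]. }
  now subst. Qed.

Lemma star_inv r v : inR r v -> r = RStar body -> exists n, v = Pn n.
Proof.
  induction 1; intro E; try discriminate.
  - now exists 0.
  - injection E as ->. apply body_inv in H; subst. destruct IHinR2 as [n ->]; auto.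
    now exists (S n).
Qed.

Lemma Pn_in n : inR alpha11 (Pn n).
Proof. change alpha11 with (RStar body). induction n. constructor. rewrite Pn_S. apply inR_starS; auto. exact body_P. Qed.

Theorem mainTheorem11 :
  forall w : list unit,
    lang alpha11 w <->
    exists n : nat, w = repeat a (n * (n + 7) * (2 * n + 1) / 6).
Proof.
  intro w; split.
  - intros [v [Hv Hd]]. destruct (@star_inv _ _ Hv (eq_refl : alpha11 = RStar body)) as [n ->].
    exists n. rewrite deref_Pn in Hd. injection Hd as <-. reflexivity.
  - intros [n ->]. exists (Pn n). split. apply Pn_in. apply deref_Pn.
Qed.
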